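(* Let $\Omega$ be a finite set with $n$ elements, let $G \le \mathrm{Sym}(\Omega)$ be $t$-transitive with $t \geq 2$, let $u \in G$, $m = |\mathrm{supp}(u)|$, $\Delta \subseteq \mathrm{supp}(u)$, and $E = \{g^{-1} u g \mid g \in G_{(\Delta)}\}$. Then: (i) If $|\Delta| \le t-1$, then for every $\gamma \in \Omega \setminus \Delta$, $$|\{x \in E \mid \gamma^x = \gamma\}| = |E| \frac{n -m}{n-|\Delta|},\qquad |\{x \in E \mid \gamma^x \ne \gamma\}| = |E| \frac{m-|\Delta|}{n-|\Delta|}.$$ (ii) If $|\Delta| \le t-2$, then for all $\gamma, \delta \in \Omega \setminus \Delta$ with $\gamma \ne \delta$, $$|\{x \in E \mid \gamma \in \mathrm{fix}(x), \delta \in \mathrm{supp}(x)\}| = |E| \frac{(n-m)(m-|\Delta|)}{(n-|\Delta|)(n- |\Delta|-1)}.$$ (iii) If $|\Delta|=1$, then for all $\gamma \in \Omega \setminus \Delta$, $$|\{x \in E \mid \gamma^x \in \Delta \}| = |E| \frac{1}{n-1}.$$ (iv) If $|\Delta|=1$ and $t \ge 3$, then for all $\gamma, \delta \in \Omega \setminus \Delta$ with $\gamma \ne \delta$, $$|\{x\in E \mid \gamma^x = \delta\}| = |E|\frac{m-2}{(n-1)(n-2)}.$$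
   Context: Permutations act on the right, $\alpha\mapsto\alpha^x$. For $x\in\mathrm{Sym}(\Omega)$, $\mathrm{supp}(x)=\{\alpha\mid\alpha^x\ne\alpha\}$ and $\mathrm{fix}(x)=\{\alpha\mid\alpha^x=\alpha\}$. $G$ is $t$-transitive if it acts transitively on the set of ordered $t$-tuples of distinct points of $\Omega$. $G_{(\Delta)}$ denotes the pointwise stabilizer of $\Delta$ in $G$. *)

(* Defs.v *)
From mathcomp Require Import all_boot all_order all_algebra all_fingroup all_solvable primitive_action.
Set Implicit Arguments. Unset Strict Implicit. Unset Printing Implicit Defensive.

(* Permutations of a finite type T act on the right: alpha^x = x alpha, and
   (x * y) alpha = y (x alpha) in mathcomp, matching the paper. *)

Definition supp (T : finType) (x : {perm T}) : {set T} := [set a | x a != a].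

Definition fixp (T : finType) (x : {perm T}) : {set T} := [set a | x a == a].

(* Main.v *)
Require Import Defs.
From mathcomp Require Import all_boot all_order all_algebra all_fingroup all_solvable primitive_action.
From mathcomp Require Import zify.
Import GRing.Theory Num.Theory.

Lemma card_sum (X : finType) (A : {set X}) (Q : pred X) :
  #|[set x in A | Q x]| = \sum_(x in A) (Q x : nat).
Proof.
rewrite -sum1_card [LHS]big_mkcond [RHS]big_mkcond /=.
by apply: eq_bigr => x _; rewrite inE; case: (x \in A); case: (Q x).
Qed.

Lemma count_gen (T Y : finType) (E H : {set {perm T}}) (f : Y -> {perm T} -> Y)
  (P : {perm T} -> Y -> bool) (S : {set Y}) (c : nat) :
  (forall x h, x \in E -> h \in H -> (x ^ h)%g \in E) ->
  (forall x y h, h \in H -> P x y -> P (x ^ h)%g (f y h)) ->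
  (forall a b, a \in S -> b \in S -> exists2 h, h \in H & f a h = b) ->
  (forall x, x \in E -> #|[set y in S | P x y]| = c) ->
  forall a, a \in S -> #|[set x in E | P x a]| * #|S| = #|E| * c.
Proof.
move=> hE hP htr hc.
have le a b : a \in S -> b \in S ->
    #|[set x in E | P x a]| <= #|[set x in E | P x b]|.
  move=> aS bS; have [h hH fab] := htr a b aS bS.
  rewrite -(card_imset _ (act_inj 'J h)).
  apply: subset_leq_card; apply/subsetP => y /imsetP[x]; rewrite inE.
  by move=> /andP[xE Pxa] ->; rewrite inE /= hE // -fab hP.
move=> a aS.
have eqN b : b \in S -> #|[set x in E | P x b]| = #|[set x in E | P x a]|.
  by move=> bS; apply/eqP; rewrite eqn_leq !le.
have : \sum_(b in S) #|[set x in E | P x b]| = \sum_(x in E) #|[set y in S | P x y]|.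
  under eq_bigr do rewrite card_sum.
  rewrite exchange_big /=.
  by apply: eq_bigr => x _; rewrite card_sum.
have e1 : \sum_(b in S) #|[set x in E | P x b]| = \sum_(b in S) #|[set x in E | P x a]|.
  by apply: eq_bigr => b bS; rewrite eqN.
have e2 : \sum_(x in E) #|[set y in S | P x y]| = \sum_(x in E) c.
  by apply: eq_bigr => x xE; rewrite hc.
by rewrite e1 e2 !sum_nat_const mulnC.
Qed.

Lemma trans_ext (T : finType) (G : {group {perm T}}) t (Delta : {set T}) k
  (a b : k.-tuple T) :
  (#|Delta| + k <= t)%N -> ntransitive t G [set: T] 'P ->
  uniq a -> uniq b -> all (fun x => x \notin Delta) a ->
  all (fun x => x \notin Delta) b ->
  exists2 g, g \in ('C_G(Delta | 'P))%g & map g a = b.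
Proof.
move=> hk htr ua ub na nb.
set s := enum Delta.
have hs : size s = #|Delta| by rewrite cardE.
have tr : ntransitive (size s + k) G [set: T] 'P.
  by apply: ntransitive_weak htr; rewrite hs.
have mem_dt (c : k.-tuple T) : uniq c -> all (fun x => x \notin Delta) c ->
    cat_tuple (in_tuple s) c \in (size s + k).-dtuple([set: T]).
  move=> uc nc; rewrite inE /= cat_uniq enum_uniq uc andbT /=.
  apply/andP; split; last by apply/subsetP => ?; rewrite inE.
  apply/hasPn => x xc /=; rewrite mem_enum.
  by move/allP: nc => /(_ x xc).
have [g gG] := atransP2 tr (mem_dt a ua na) (mem_dt b ub nb).
move/(congr1 val) => /= /eqP; rewrite map_cat eqseq_cat ?size_map //.
case/andP => /eqP hs1 /eqP hb.
exists g => //; rewrite inE gG /=; apply/astabP => x xD /=.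
rewrite apermE.
have xs : x \in s by rewrite mem_enum.
have il : index x s < size s by rewrite index_mem.
rewrite -{1}(nth_index x xs) -(nth_map x (g x)) // -hs1.
by rewrite (set_nth_default x) ?nth_index.
Qed.

Lemma ratconv (N e a b : nat) : (0 < b)%N -> (N * b = e * a)%N ->
  (N%:R : rat) = (e%:R * (a%:R / b%:R))%R.
Proof.
move=> b0 h; rewrite mulrA; apply: (canRL (mulfK _)).
  by rewrite pnatr_eq0 -lt0n.
by rewrite -!natrM h.
Qed.

Local Open Scope ring_scope.

Theorem lemma2p5 (T : finType) (G : {group {perm T}}) (t : nat)
    (u : {perm T}) (Delta : {set T}) :
  (2 <= t)%N ->
  ntransitive t G [set: T] 'P ->
  u \in G ->
  Delta \subset supp u ->
  let n := #|T| in
  let m := #|supp u| in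
  let d := #|Delta| in
  let E := [set (u ^ g)%g | g in ('C_G(Delta | 'P))%g] in
  ((d <= t - 1)%N ->
     forall gamma, gamma \notin Delta ->
       (#|[set x in E | x gamma == gamma]|%:R : rat)
         = #|E|%:R * ((n - m)%:R / (n - d)%:R)
       /\ (#|[set x in E | x gamma != gamma]|%:R : rat)
         = #|E|%:R * ((m - d)%:R / (n - d)%:R))
  /\ ((d <= t - 2)%N ->
     forall gamma delta, gamma \notin Delta -> delta \notin Delta ->
       gamma != delta ->
       (#|[set x in E | (gamma \in fixp x) && (delta \in supp x)]|%:R : rat)
         = #|E|%:R * (((n - m)%:R * (m - d)%:R)
                      / ((n - d)%:R * (n - d - 1)%:R)))
  /\ (d = 1%N ->
     forall gamma, gamma \notin Delta ->
       (#|[set x in E | x gamma \in Delta]|%:R : rat)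
         = #|E|%:R * (1 / (n - 1)%:R))
  /\ (d = 1%N -> (3 <= t)%N ->
     forall gamma delta, gamma \notin Delta -> delta \notin Delta ->
       gamma != delta ->
       (#|[set x in E | x gamma == delta]|%:R : rat)
         = #|E|%:R * ((m - 2)%:R / ((n - 1)%:R * (n - 2)%:R))).
Proof.
move=> t2 tr uG DS n m d E.
set H := ('C_G(Delta | 'P))%g.
have Hfix h a : h \in H -> a \in Delta -> h a = a.
  by rewrite inE => /andP[_ /astabP hP] aD; have := hP a aD; rewrite /= apermE.
have HE x h : x \in E -> h \in H -> (x ^ h)%g \in E.
  by move=> /imsetP[g gH ->] hH; rewrite -conjgM; apply: imset_f; rewrite groupM.
have suppJ (x g : {perm T}) : supp (x ^ g)%g = (g^-1)%g @^-1: supp x.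
  apply/setP => a; rewrite !inE.
  by rewrite -{1 2}(permKV g a) permJ (inj_eq perm_inj).
have Eprop x : x \in E -> Delta \subset supp x /\ #|supp x| = m.
  case/imsetP => g gH ->; rewrite suppJ (card_preimset _ (@perm_inj _ (g^-1)%g)); split=> //.
  apply/subsetP => a aD; rewrite inE.
  by rewrite -{1}(Hfix g a gH aD) permK (subsetP DS).
set C := ~: Delta.
have cardC : #|C| = (n - d)%N by rewrite /n /d -(cardsC Delta) addKn.
have cardF x : x \in E -> #|[set y in C | x y == y]| = (n - m)%N.
  move=> xE; have [DSx cx] := Eprop x xE.
  have -> : [set y in C | x y == y] = ~: supp x.
    apply/setP=> y; rewrite !inE; case: eqP => //= xy; rewrite ?andbT ?andbF //=.
    by apply/negP => yD; move: (subsetP DSx y yD); rewrite inE xy eqxx.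
  by rewrite /n -(cardsC (supp x)) cx addKn.
have cardS x : x \in E -> #|[set y in C | x y != y]| = (m - d)%N.
  move=> xE; have [DSx cx] := Eprop x xE.
  have -> : [set y in C | x y != y] = supp x :\: Delta.
    by apply/setP=> y; rewrite !inE andbC.
  by rewrite cardsD (setIidPr DSx) cx.
have trans1 : (d + 1 <= t)%N -> forall a b, a \in C -> b \in C ->
    exists2 h, h \in H & h a = b.
  move=> hdt a b; rewrite !inE => aD bD.
  have [g gH e] := @trans_ext T G t Delta 1 [tuple a] [tuple b] hdt tr
    ltac:(by []) ltac:(by []) ltac:(by rewrite /= aD) ltac:(by rewrite /= bD).
  by exists g => //; case: e.
set S2 := [set p : (T * T)%type | (p.1 \in C) && ((p.2 \in C) && (p.1 != p.2))].
have trans2 : (d + 2 <= t)%N -> forall p q, p \in S2 -> q \in S2 ->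
    exists2 h, h \in H & (h p.1, h p.2) = q.
  move=> hdt [a1 a2] [b1 b2]; rewrite !inE /= => /and3P[a1D a2D a12] /and3P[b1D b2D b12].
  have [g gH e] := @trans_ext T G t Delta 2 [tuple a1; a2] [tuple b1; b2] hdt tr
    ltac:(by rewrite /= inE a12) ltac:(by rewrite /= inE b12)
    ltac:(by rewrite /= a1D a2D) ltac:(by rewrite /= b1D b2D).
  by exists g => //; case: e => -> ->.
have cardS2 : #|S2| = ((n - d) * (n - d - 1))%N.
  rewrite -sum1dep_card.
  rewrite -(pair_big_dep (fun a => a \in C) (fun a b => (b \in C) && (a != b))
     (fun _ _ => 1%N)).
  rewrite (eq_bigr (fun _ => (n - d - 1)%N)); last first.
    move=> a aC; rewrite sum1dep_card -cardC (cardsD1 a C) aC add1n subn1 /=.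
    by apply: eq_card => b; rewrite !inE andbC eq_sym.
  by rewrite sum_nat_const cardC.
have notfix x alpha : x \in E -> alpha \in Delta ->
    x alpha != alpha /\ (x^-1)%g alpha != alpha.
  move=> xE aD; have [DSx _] := Eprop x xE.
  have xa : x alpha != alpha by move: (subsetP DSx alpha aD); rewrite inE.
  split=> //; apply: contraNneq xa => h; by rewrite -{1}h permKV.
split.
  move=> hd gamma gD.
  have hdt : (d + 1 <= t)%N by lia.
  have gC : gamma \in C by rewrite inE.
  have C0 : (0 < #|C|)%N by apply/card_gt0P; exists gamma.
  split.
    apply: ratconv; first by rewrite -cardC.
    rewrite -cardC.
    apply: (@count_gen T T E H (fun a h => h a) (fun x a => x a == a) C (n - m)%N) => //.
      by move=> x y h hH /eqP xy; rewrite permJ xy.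
    exact: trans1.
  apply: ratconv; first by rewrite -cardC.
  rewrite -cardC.
  apply: (@count_gen T T E H (fun a h => h a) (fun x a => x a != a) C (m - d)%N) => //.
    by move=> x y h hH; rewrite permJ (inj_eq perm_inj).
  exact: trans1.
split.
  move=> hd gamma delta gD dD gd.
  have hdt : (d + 2 <= t)%N by lia.
  have pS : (gamma, delta) \in S2 by rewrite !inE gD dD gd.
  rewrite -!natrM.
  apply: ratconv; first by rewrite -cardS2; apply/card_gt0P; exists (gamma, delta).
  rewrite -cardS2.
  have -> : [set x in E | (gamma \in fixp x) && (delta \in supp x)] =
     [set x in E | (x (gamma, delta).1 == (gamma, delta).1) &&
                   (x (gamma, delta).2 != (gamma, delta).2)].
    by apply/setP => x; rewrite !inE.
  apply: (@count_gen T (T * T)%type E H (fun p h => (h p.1, h p.2))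
     (fun x p => (x p.1 == p.1) && (x p.2 != p.2)) S2 ((n - m) * (m - d))%N _ _ _ _ (gamma, delta)) => //.

  - move=> x [a b] h hH /= /andP[xa xb].
    by rewrite !permJ !(inj_eq perm_inj) xa xb.
  - exact: trans2.
  move=> x xE; have [DSx cx] := Eprop x xE.
  have -> : [set y in S2 | (x y.1 == y.1) && (x y.2 != y.2)] =
      setX (~: supp x) (supp x :\: Delta).
    apply/setP => [[a b]]; rewrite !inE /=.
    case xa: (x a == a); rewrite ?andbF //=.
    case xb: (x b == b); rewrite /= ?andbF ?andbT //.
    have aD : a \notin Delta by apply/negP => /(subsetP DSx); rewrite inE xa.
    have ab : a != b by apply: (contraFneq _ xb) => e; rewrite -e xa.
    by rewrite aD ab ?andbT.
  rewrite cardsX cardsD (setIidPr DSx) cx.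
  have := cardsC (supp x); rewrite cx -/n => hc.
  congr (_ * _)%N; lia.
have getalpha : d = 1%N -> exists alpha, Delta = [set alpha].
  by move=> d1; apply/cards1P; apply/eqP; exact: d1.
split.
  move=> d1 gamma gD.
  have [alpha Da] := getalpha d1.
  have hdt : (d + 1 <= t)%N by lia.
  have gC : gamma \in C by rewrite inE.
  have C0 : (0 < #|C|)%N by apply/card_gt0P; exists gamma.
  apply: (@ratconv _ _ 1 _); first by rewrite cardC d1 in C0.
  have -> : (n - 1)%N = #|C| by rewrite cardC d1.
  have -> : [set x in E | x gamma \in Delta] = [set x in E | x gamma == alpha].
    by apply/setP => x; rewrite !inE Da inE.
  apply: (@count_gen T T E H (fun a h => h a) (fun x a => x a == alpha) C 1%N) => //.
  - by move=> x y h hH /eqP xy; rewrite permJ xy Hfix // Da inE.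
  - exact: trans1.
  move=> x xE.
  have [xa xia] := notfix x alpha xE ltac:(by rewrite Da inE).
  have -> : [set y in C | x y == alpha] = [set (x^-1)%g alpha].
    apply/setP => y; rewrite !inE Da inE.
    have -> : (x y == alpha) = (y == (x^-1)%g alpha).
      by rewrite -[RHS](inj_eq (@perm_inj _ x)) permKV.
    by case: (y =P (x^-1)%g alpha) => [->|]; rewrite ?andbF ?andbT.
  by rewrite cards1.
move=> d1 t3 gamma delta gD dD gd.
have [alpha Da] := getalpha d1.
have hdt : (d + 2 <= t)%N by lia.
have pS : (gamma, delta) \in S2 by rewrite !inE gD dD gd.
rewrite -natrM.
have -> : ((n - 1) * (n - 2))%N = #|S2| by rewrite cardS2 d1; congr (_ * _)%N; lia.
apply: ratconv; first by apply/card_gt0P; exists (gamma, delta).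
apply: (@count_gen T (T * T)%type E H (fun p h => (h p.1, h p.2))
   (fun x p => x p.1 == p.2) S2 (m - 2)%N _ _ _ _ (gamma, delta)) => //.
- by move=> x [a b] h hH /= /eqP xab; rewrite permJ xab.
- exact: trans2.
move=> x xE; have [DSx cx] := Eprop x xE.
have [xa xia] := notfix x alpha xE ltac:(by rewrite Da inE).
set A := (supp x :\ alpha) :\ (x^-1)%g alpha.
have -> : [set y in S2 | x y.1 == y.2] = (fun a => (a, x a)) @: A.
  apply/setP => [[a b]]; rewrite !inE /= Da !inE; apply/idP/imsetP.
    case/andP => /and3P[aD bD ab] /eqP xab; exists a; last by rewrite xab.
    rewrite -xab in bD ab.
    rewrite !inE; apply/and3P; split => //.
      by apply: contraNneq bD => ->; rewrite permKV.
    by rewrite eq_sym.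
  case => a'; rewrite !inE => /and3P[a1 a2 a3] [-> ->].
  rewrite eqxx andbT a2 /= (eq_sym a') a3 andbT.
  by apply: contra a1 => /eqP <-; rewrite permK.
have inj : injective (fun a => (a, x a)) by move=> a b [].
rewrite (card_imset _ inj).
have h1 := cardsD1 alpha (supp x).
have h2 := cardsD1 ((x^-1)%g alpha) (supp x :\ alpha).
have m1 : alpha \in supp x by rewrite inE.
have m2 : (x^-1)%g alpha \in supp x :\ alpha.
  by rewrite !inE permKV (eq_sym alpha) xia.
rewrite m1 cx in h1; rewrite m2 -/A in h2.
lia.
Qed.
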